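(* Let $\mathcal{U}$ be a uniformity on a set $X$ and let $\widehat{\mathcal{U}}$ be its completion (a uniformity on the completion $\widehat{X}\supseteq X$). Then $\mathcal{U} =_T \widehat{\mathcal{U}}$, where both are ordered by reverse inclusion.
   Context: A directed set is a partially ordered set in which any two elements have a common upper bound. For directed sets $P,Q$, $P \ge_T Q$ means there is a map $\phi:P\to Q$ such that $\phi(C)$ is cofinal in $Q$ for every cofinal $C\subseteq P$; $P =_T Q$ means $P\ge_T Q$ and $Q \ge_T P$. *)

(* Defs.v *)
From HB Require Import structures.
From mathcomp Require Import all_boot all_order all_algebra.
From mathcomp Require Import all_classical all_reals all_analysis.
Set Implicit Arguments. Unset Strict Implicit. Unset Printing Implicit Defensive.
Local Open Scope classical_set_scope.

(* A (directed) preordered set is given as a carrier set P : set A together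
   with a relation le on A (only its restriction to P matters). *)

Definition cofinal {A : Type} (le : A -> A -> Prop) (P C : set A) : Prop :=
  C `<=` P /\ forall p, P p -> exists2 c, C c & le p c.

Definition tukey_ge {A B : Type} (leA : A -> A -> Prop) (P : set A)
    (leB : B -> B -> Prop) (Q : set B) : Prop :=
  exists phi : A -> B,
    (forall p, P p -> Q (phi p)) /\
    forall C, cofinal leA P C -> cofinal leB Q (phi @` C).

Definition tukey_eq {A B : Type} (leA : A -> A -> Prop) (P : set A)
    (leB : B -> B -> Prop) (Q : set B) : Prop :=
  tukey_ge leA P leB Q /\ tukey_ge leB Q leA P.

Definition rev_incl {T : Type} (U V : set T) : Prop := V `<=` U.

Definition entourages_of (X : uniformType) : set (set (X * X)) :=
  [set U | entourage U].

Definition complete_uniform (Y : uniformType) : Prop :=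
  forall F : set_system Y, ProperFilter F -> cauchy F -> exists y : Y, F --> y.

Definition uniform_embedding (X Y : uniformType) (i : X -> Y) : Prop :=
  injective i /\
  forall U : set (X * X),
    entourage U <->
    exists2 W : set (Y * Y), entourage W &
      [set xy : X * X | W (i xy.1, i xy.2)] `<=` U.

Definition is_completion (X Y : uniformType) (i : X -> Y) : Prop :=
  complete_uniform Y /\ uniform_embedding i /\ dense (range i).
Arguments entourages_of X : clear implicits.

(* Main.v *)
Require Import Defs.
From mathcomp Require Import all_boot all_order all_algebra.
From mathcomp Require Import all_classical all_reals all_analysis.
Local Open Scope classical_set_scope.

Lemma dense_nbhs_ex {T : topologicalType} {D N : set T} {y : T} :
  dense D -> nbhs y N -> exists z, N z /\ D z.
Proof.
move=> dD Ny.
have [z [Nz Dz]] := dD (N°) (ex_intro _ y Ny) (@open_interior _ N).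
by exists z; split => //; exact: interior_subset.
Qed.

Theorem mainTheorem2 (X Y : uniformType) (i : X -> Y) :
  is_completion i ->
  tukey_eq (@rev_incl (X * X)) (entourages_of X) (@rev_incl (Y * Y)) (entourages_of Y).
Proof.
move=> [_ [[_ emb] dns]].
pose psi (W : set (Y * Y)) : set (X * X) := [set xx | W (i xx.1, i xx.2)].
pose phi (U : set (X * X)) : set (Y * Y) :=
  [set yy | exists2 V, entourage V & forall x1 x2,
     V (i x1, yy.1) -> V (yy.2, i x2) -> U (x1, x2)].
have phiE : forall U, entourage U -> entourage (phi U).
  move=> U /emb [W eW sWU].
  have eV1 := entourage_split_ent eW.
  have eV := entourage_split_ent eV1.
  apply: (filterS _ eV) => -[y1 y2] Vy /=.
  exists (split_ent (split_ent W)) => // x1 x2 h1 h2.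
  apply: sWU => /=.
  apply: (@entourage_split _ y2) => //.
    exact: (@entourage_split _ y1).
  exact: split_ent_subset.
have phimono : forall U U', U `<=` U' -> phi U `<=` phi U'.
  move=> U U' sUU' yy [V eV hV]; exists V => // x1 x2 h1 h2.
  exact/sUU'/hV.
have phicof : forall W, entourage W -> exists2 U0, entourage U0 & phi U0 `<=` W.
  move=> W eW.
  have eV1 := entourage_split_ent eW.
  have eV0 := entourage_split_ent eV1.
  exists (psi (split_ent (split_ent W))).
    by apply/emb; exists (split_ent (split_ent W)).
  move=> [y1 y2] [V eV hV] /=.
  have [z1 [/xsectionP [Vz1 V0z1] [x1 _ ex1]]] :=
    dense_nbhs_ex dns (nbhs_entourage y1 (filterI (entourage_inv eV) eV0)).
  have [z2 [/xsectionP [Vz2 V0z2] [x2 _ ex2]]] :=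
    dense_nbhs_ex dns (nbhs_entourage y2 (filterI eV (entourage_inv eV0))).
  subst z1 z2.
  have hx : split_ent (split_ent W) (i x1, i x2) by apply: (hV x1 x2).
  apply: (@entourage_split _ (i x2) y1 y2 W eW).
    exact: (@entourage_split _ (i x1) y1 (i x2) (split_ent W) eV1 V0z1 hx).
  exact: (@split_ent_subset _ (split_ent W) eV1 (i x2, y2) V0z2).
split.
- exists phi; split; first by move=> p; exact: phiE.
  move=> C [sC cC]; split.
    by move=> _ [c Cc <-]; apply: phiE; exact: sC.
  move=> W eW.
  have [U0 eU0 sU0] := phicof W eW.
  have [c Cc cU0] := cC U0 eU0.
  exists (phi c); first by exists c.
  by move=> yy /(phimono _ _ cU0) /sU0.
- exists psi; split.
    by move=> W eW; apply/emb; exists W.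
  move=> C [sC cC]; split.
    by move=> _ [c Cc <-]; apply/emb; exists c => //; exact: sC.
  move=> U eU.
  have [W eW sWU] := (proj1 (emb U)) eU.
  have [c Cc cW] := cC W eW.
  exists (psi c); first by exists c.
  by move=> xx /= /cW /sWU.
Qed.
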